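(* Let $\mathbf A,\mathbf B$ be $\tau$-algebras. Then $\mathbf B\in\mathbb{HSP}(\mathbf A)$ if and only if the map $\varepsilon:\mathbf A^\uparrow\to\mathbf B^\uparrow$, $\varepsilon(t^{\mathbf A})=t^{\mathbf B}$ ($t$ a $\tau$-term over $V$), is a well-defined homomorphism of infinitary clone $\tau$-algebras.
   Context: $\tau$ is a set of $\omega$-ary operation symbols disjoint from $\{q\}\cup\{e_i:i\in\omega\}$; a $\tau$-algebra has operations $A^\omega\to A$. $\tau$-terms over $V=\{e_0,e_1,\dots\}$ are well-founded countably branching terms built by $f(t_0,t_1,\dots)$; term operations: $e_i^{\mathbf A}(s)=s_i$, $f(t_0,t_1,\dots)^{\mathbf A}(s)=f^{\mathbf A}(t_0^{\mathbf A}(s),t_1^{\mathbf A}(s),\dots)$. $\mathbb{HSP}(\mathbf A)$ is the class of algebras isomorphic to homomorphic images of subalgebras of arbitrary direct powers of $\mathbf A$. An infinitary clone $\tau$-algebra is an algebra with constants $e_i$ ($i\in\omega$), a constant $f$ for each $f\in\tau$, and an $\omega$-ary $q$ satisfying (N1) $q(e_i,x_0,x_1,\dots)=x_i$; (N2) $q(x,e_0,e_1,\dots)=x$; (N3) $q(q(x,y_0,y_1,\dots),\boldsymbol z)=q(x,q(y_0,\boldsymbol z),q(y_1,\boldsymbol z),\dots)$. $\mathbf A^\uparrow$ is the set $\{t^{\mathbf A}\}$ of term operations with $e_i(s)=s_i$, $q(g_0,g_1,\dots)(s)=g_0(g_1(s),g_2(s),\dots)$ and $f\mapsto f^{\mathbf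 A}$. *)

(* Defs.v *)
Set Implicit Arguments.

Record algebra (tau : Type) := Algebra {
  carrier :> Type;
  op : tau -> (nat -> carrier) -> carrier }.
Arguments op {tau} a f s.

(* tau-terms over V = {e_0, e_1, ...}: well-founded countably branching trees. *)
Inductive term (tau : Type) : Type :=
| e : nat -> term tau
| app : tau -> (nat -> term tau) -> term tau.
Arguments e {tau} i.

Fixpoint term_op (tau : Type) (A : algebra tau) (t : term tau) (s : nat -> A) : A :=
  match t with
  | e i => s i
  | app f ts => op A f (fun i => term_op A (ts i) s)
  end.

Definition is_hom {tau : Type} (A B : algebra tau) (h : A -> B) : Prop :=
  forall (f : tau) (s : nat -> A), h (op A f s) = op B f (fun i => h (s i)).

Definition surjective (X Y : Type) (h : X -> Y) : Prop := forall y, exists x, h x = y.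

Definition is_iso {tau : Type} (A B : algebra tau) (h : A -> B) : Prop :=
  is_hom A B h /\ exists g : B -> A, (forall x, g (h x) = x) /\ (forall y, h (g y) = y).

Definition power (tau : Type) (A : algebra tau) (I : Type) : algebra tau :=
  @Algebra tau (I -> A) (fun f s k => op A f (fun n => s n k)).

Definition closed (tau : Type) (A : algebra tau) (S : A -> Prop) : Prop :=
  forall (f : tau) (s : nat -> A), (forall n, S (s n)) -> S (op A f s).

Definition subalg (tau : Type) (A : algebra tau) (S : A -> Prop) (HS : closed A S)
  : algebra tau :=
  @Algebra tau {x : A | S x}
    (fun f s => exist S (op A f (fun n => proj1_sig (s n)))
                  (HS f _ (fun n => proj2_sig (s n)))).

Definition HSP (tau : Type) (A B : algebra tau) : Prop :=
  exists (I : Type) (S : power A I -> Prop) (HS : closed (power A I) S)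
         (C : algebra tau) (h : subalg HS -> C) (k : C -> B),
    is_hom _ _ h /\ surjective h /\ is_iso _ _ k.

(* The clone tau-algebra operations on the set of all omega-ary operations
   (nat -> A) -> A; A^up is the subset of term operations. *)
Definition up_e (tau : Type) (A : algebra tau) (i : nat) : (nat -> A) -> A :=
  fun s => s i.
Definition up_f (tau : Type) (A : algebra tau) (f : tau) : (nat -> A) -> A :=
  fun s => op A f s.
Definition up_q {tau : Type} (A : algebra tau)
  (g0 : (nat -> A) -> A) (g : nat -> (nat -> A) -> A) : (nat -> A) -> A :=
  fun s => g0 (fun i => g i s).

Definition in_up (tau : Type) (A : algebra tau) (g : (nat -> A) -> A) : Prop :=
  exists t : term tau, g = term_op A t.

(* h restricted to A^up is a homomorphism of infinitary clone tau-algebras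
   A^up -> B^up: it preserves the constants e_i, the constants f, and q. *)
Definition up_hom (tau : Type) (A B : algebra tau)
  (h : ((nat -> A) -> A) -> ((nat -> B) -> B)) : Prop :=
  (forall i, h (up_e A i) = up_e B i) /\
  (forall f, h (up_f A f) = up_f B f) /\
  (forall g0 g, in_up A g0 -> (forall i, in_up A (g i)) ->
     h (up_q A g0 g) = up_q B (h g0) (fun i => h (g i))).

(* Main.v *)
Require Import Defs.
From Stdlib Require Import FunctionalExtensionality ProofIrrelevance ClassicalEpsilon Cantor.

Fixpoint subst {tau} (t : term tau) (sg : nat -> term tau) : term tau :=
  match t with e i => sg i | app f ts => app f (fun n => subst (ts n) sg) end.

Lemma term_op_subst {tau} (X : algebra tau) t sg s :
  term_op X (subst t sg) s = term_op X t (fun i => term_op X (sg i) s).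
Proof.
  induction t as [i| f ts IH]; simpl; auto.
  f_equal. apply functional_extensionality; intro n; apply IH.
Qed.

Definition rename {tau} (t : term tau) (r : nat -> nat) := subst t (fun i => e (r i)).
Lemma term_op_rename {tau} (X : algebra tau) (t : term tau) r s :
  term_op X (rename t r) s = term_op X t (fun i => s (r i)).
Proof. unfold rename; rewrite term_op_subst; reflexivity. Qed.

Definition ident {tau} (A B : algebra tau) := forall t1 t2 : term tau,
  term_op A t1 = term_op A t2 -> term_op B t1 = term_op B t2.

Definition comb_t {tau} (f : tau) (ts : nat -> term tau) : term tau :=
  app f (fun n => rename (ts n) (fun m => to_nat (n, m))).
Definition comb_b {Z : Type} (bs : nat -> nat -> Z) (j : nat) : Z :=
  let (n, m) := of_nat j in bs n m.

Lemma comb_eval {tau} (Y : algebra tau) (Z : Type) f ts (bs : nat -> nat -> Z) (k : Z -> Y) :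
  term_op Y (comb_t f ts) (fun j => k (comb_b bs j)) =
  op Y f (fun n => term_op Y (ts n) (fun m => k (bs n m))).
Proof.
  unfold comb_t; cbn [term_op]. f_equal. apply functional_extensionality; intro n.
  rewrite term_op_rename. f_equal. apply functional_extensionality; intro m.
  unfold comb_b. rewrite cancel_of_to. reflexivity.
Qed.

Lemma wd {tau} (A B : algebra tau) (H : ident A B) t1 t2 (b1 b2 : nat -> B) :
  (forall k : B -> A, term_op A t1 (fun n => k (b1 n)) = term_op A t2 (fun n => k (b2 n))) ->
  term_op B t1 b1 = term_op B t2 b2.
Proof.
  intro Hk.
  set (g := fun j => let (n, m) := of_nat j in match n with 0 => b1 m | _ => b2 m end).
  assert (Hg1 : forall m, g (to_nat (0, m)) = b1 m)
    by (intro; unfold g; rewrite cancel_of_to; reflexivity).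
  assert (Hg2 : forall m, g (to_nat (1, m)) = b2 m)
    by (intro; unfold g; rewrite cancel_of_to; reflexivity).
  set (u1 := rename t1 (fun m => to_nat (0, m))).
  set (u2 := rename t2 (fun m => to_nat (1, m))).
  set (r := fun b : B => epsilon (inhabits 0) (fun j => g j = b)).
  assert (Hr : forall n, g (r (g n)) = g n).
  { intro n; unfold r; apply epsilon_spec; exists n; reflexivity. }
  set (rho := fun n => r (g n)).
  assert (E : term_op A (rename u1 rho) = term_op A (rename u2 rho)).
  { apply functional_extensionality; intro s. rewrite !term_op_rename.
    unfold u1, u2; rewrite !term_op_rename. cbv beta.
    specialize (Hk (fun b => s (r b))). cbv beta in Hk.
    assert (e1 : (fun i => s (rho (to_nat (0, i)))) = (fun n => s (r (b1 n))))
      by (apply functional_extensionality; intro i; unfold rho; rewrite Hg1; reflexivity).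
    assert (e2 : (fun i => s (rho (to_nat (1, i)))) = (fun n => s (r (b2 n))))
      by (apply functional_extensionality; intro i; unfold rho; rewrite Hg2; reflexivity).
    rewrite e1, e2. exact Hk. }
  apply H in E.
  assert (E' : term_op B (rename u1 rho) g = term_op B (rename u2 rho) g) by (rewrite E; reflexivity).
  rewrite !term_op_rename in E'.
  assert (eg : (fun i => g (rho i)) = g)
    by (apply functional_extensionality; intro i; apply Hr).
  rewrite eg in E'. unfold u1, u2 in E'. rewrite !term_op_rename in E'.
  assert (e1 : (fun i => g (to_nat (0, i))) = b1)
    by (apply functional_extensionality; intro i; apply Hg1).
  assert (e2 : (fun i => g (to_nat (1, i))) = b2)
    by (apply functional_extensionality; intro i; apply Hg2).
  rewrite e1, e2 in E'. exact E'.
Qed.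

Definition Sgen {tau} (A B : algebra tau) (x : power A (B -> A)) : Prop :=
  exists p : term tau * (nat -> B), x = fun k => term_op A (fst p) (fun n => k (snd p n)).

Lemma Sgen_closed {tau} (A B : algebra tau) : closed (power A (B -> A)) (Sgen A B).
Proof.
  intros f s Hs.
  set (ps := fun n => proj1_sig (constructive_indefinite_description _ (Hs n))).
  assert (Hp : forall n, s n = fun k => term_op A (fst (ps n)) (fun m => k (snd (ps n) m)))
    by (intro n; exact (proj2_sig (constructive_indefinite_description _ (Hs n)))).
  exists (comb_t f (fun n => fst (ps n)), comb_b (fun n => snd (ps n))).
  apply functional_extensionality; intro k. simpl fst; simpl snd.
  rewrite comb_eval. simpl. f_equal. apply functional_extensionality; intro n.
  rewrite (Hp n). reflexivity.
Qed.

Definition hrep {tau} (A B : algebra tau) (x : subalg (Sgen_closed A B)) : B :=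
  let p := proj1_sig (constructive_indefinite_description _ (proj2_sig x)) in
  term_op B (fst p) (snd p).

Lemma hrep_spec {tau} (A B : algebra tau) (x : subalg (Sgen_closed A B)) :
  exists p : term tau * (nat -> B),
    proj1_sig x = (fun k => term_op A (fst p) (fun n => k (snd p n))) /\
    hrep A B x = term_op B (fst p) (snd p).
Proof.
  exists (proj1_sig (constructive_indefinite_description _ (proj2_sig x))). split.
  - exact (proj2_sig (constructive_indefinite_description _ (proj2_sig x))).
  - reflexivity.
Qed.

Lemma back {tau} (A B : algebra tau) : ident A B -> HSP A B.
Proof.
  intro H.
  exists (B -> A), (Sgen A B), (Sgen_closed A B), B, (@hrep tau A B), (fun b => b).
  split; [|split].
  - intros f s.
    destruct (hrep_spec A B (op (subalg (Sgen_closed A B)) f s)) as [q [Hq1 Hq2]].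
    rewrite Hq2.
    set (ps := fun n => proj1_sig (constructive_indefinite_description _ (proj2_sig (s n)))).
    assert (Hp : forall n, proj1_sig (s n) = fun k => term_op A (fst (ps n)) (fun m => k (snd (ps n) m)))
      by (intro n; exact (proj2_sig (constructive_indefinite_description _ (proj2_sig (s n))))).
    change (term_op B (fst q) (snd q) = op B f (fun i => term_op B (fst (ps i)) (snd (ps i)))).
    transitivity (term_op B (comb_t f (fun n => fst (ps n))) (comb_b (fun n => snd (ps n)))).
    2: exact (comb_eval B B f (fun n => fst (ps n)) (fun n => snd (ps n)) (fun b => b)).
    apply (wd A B H). intro k.
    rewrite comb_eval.
    pose proof (f_equal (fun F => F k) Hq1) as Hk. simpl in Hk. rewrite <- Hk.
    f_equal. apply functional_extensionality; intro n. exact (f_equal (fun F => F k) (Hp n)).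
  - intro y.
    assert (Hy : Sgen A B (fun k => k y)) by (exists (e 0, fun _ => y); reflexivity).
    exists (exist _ (fun k => k y) Hy).
    destruct (hrep_spec A B (exist (Sgen A B) (fun k => k y) Hy)) as [q [Hq1 Hq2]].
    transitivity (term_op B (fst q) (snd q)); [exact Hq2|]. change y with (term_op B (e 0) (fun _ : nat => y)).
    apply (wd A B H). intro k.
    pose proof (f_equal (fun F => F k) Hq1) as Hk. simpl in Hk. rewrite <- Hk. reflexivity.
  - split; [intros f s; reflexivity|]. exists (fun b => b); split; reflexivity.
Qed.

Lemma term_op_power {tau} (A : algebra tau) I t (s : nat -> power A I) :
  term_op (power A I) t s = fun k => term_op A t (fun n => s n k).
Proof.
  induction t as [i| f ts IH]; simpl; auto.
  apply functional_extensionality; intro k. f_equal.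
  apply functional_extensionality; intro n. rewrite IH. reflexivity.
Qed.

Lemma term_op_sub {tau} (X : algebra tau) S (HS : closed X S) t (s : nat -> subalg HS) :
  proj1_sig (term_op (subalg HS) t s) = term_op X t (fun n => proj1_sig (s n)).
Proof.
  induction t as [i| f ts IH]; simpl; auto.
  f_equal. apply functional_extensionality; intro n. apply IH.
Qed.

Lemma term_op_hom {tau} (C D : algebra tau) h (Hh : is_hom C D h) t s :
  h (term_op C t s) = term_op D t (fun n => h (s n)).
Proof.
  induction t as [i| f ts IH]; simpl; auto.
  rewrite Hh. f_equal. apply functional_extensionality; intro n. apply IH.
Qed.

Lemma ident_power {tau} (A : algebra tau) I : ident A (power A I).
Proof.
  intros t1 t2 E. apply functional_extensionality; intro s.
  rewrite !term_op_power. rewrite E. reflexivity.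
Qed.

Lemma sig_eq (T : Type) (P : T -> Prop) (x y : {z : T | P z}) :
  proj1_sig x = proj1_sig y -> x = y.
Proof.
  destruct x as [x px], y as [y py]; simpl; intros ->. f_equal. apply proof_irrelevance.
Qed.

Lemma ident_sub {tau} (A X : algebra tau) S (HS : closed X S) :
  ident A X -> ident A (subalg HS).
Proof.
  intros H t1 t2 E. apply functional_extensionality; intro s.
  apply sig_eq. rewrite !term_op_sub. rewrite (H _ _ E). reflexivity.
Qed.

Lemma ident_hom {tau} (A C D : algebra tau) h :
  ident A C -> is_hom C D h -> surjective h -> ident A D.
Proof.
  intros H Hh Hs t1 t2 E. apply functional_extensionality; intro s.
  set (s' := fun n => proj1_sig (constructive_indefinite_description _ (Hs (s n)))).
  assert (es : (fun n => h (s' n)) = s).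
  { apply functional_extensionality; intro n.
    exact (proj2_sig (constructive_indefinite_description _ (Hs (s n)))). }
  rewrite <- es. rewrite <- !term_op_hom by exact Hh. rewrite (H _ _ E). reflexivity.
Qed.

Lemma forth {tau} (A B : algebra tau) : HSP A B -> ident A B.
Proof.
  intros (I & S & HS & C & h & k & Hh & Hs & Hk & g & Hg1 & Hg2).
  apply (ident_hom A C B k).
  - apply (ident_hom A (subalg HS) C h); auto.
    apply ident_sub, ident_power.
  - exact Hk.
  - intro y. exists (g y). apply Hg2.
Qed.

Theorem proposition8p1 (tau : Type) (A B : algebra tau) :
  HSP A B <->
  exists eps : ((nat -> A) -> A) -> ((nat -> B) -> B),
    (forall t : term tau, eps (term_op A t) = term_op B t) /\ up_hom A B eps.
Proof.
  split.
  - intro HH. pose proof (forth A B HH) as H.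
    set (eps := fun g : (nat -> A) -> A =>
           term_op B (epsilon (inhabits (@e tau 0)) (fun t => g = term_op A t))).
    assert (Heps : forall t, eps (term_op A t) = term_op B t).
    { intro t. unfold eps. apply H. symmetry.
      apply (epsilon_spec (inhabits (@e tau 0)) (fun t' => term_op A t = term_op A t')).
      exists t; reflexivity. }
    exists eps. split; [exact Heps|]. split; [|split].
    + intro i. exact (Heps (e i)).
    + intro f. exact (Heps (app f (fun i => e i))).
    + intros g0 g [t0 Ht0] Hg.
      set (ts := fun i => proj1_sig (constructive_indefinite_description _ (Hg i))).
      assert (Hts : g = fun i => term_op A (ts i)).
      { apply functional_extensionality; intro i.
        exact (proj2_sig (constructive_indefinite_description _ (Hg i))). }
      subst g0. rewrite Hts.
      assert (Eq : forall X : algebra tau,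
                 up_q X (term_op X t0) (fun i => term_op X (ts i)) = term_op X (subst t0 ts)).
      { intro X. apply functional_extensionality; intro s. rewrite term_op_subst. reflexivity. }
      rewrite Eq, Heps, <- Eq. unfold up_q. rewrite Heps.
      apply functional_extensionality; intro s. f_equal.
      apply functional_extensionality; intro i. rewrite Heps. reflexivity.
  - intros (eps & Heps & _). apply (back A B).
    intros t1 t2 E. rewrite <- !Heps, E. reflexivity.
Qed.
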